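(* Let $k$ be an integer and $d,m\geqslant1$ integers, let $U\subset\{k+d,k+2d,\dots,k+md\}$, let $q$ be a positive integer coprime to $d$, and let $a$ be a residue class modulo $q$. If $|U|\geqslant\frac m2+\frac q2$, then the number of elements of $U+U$ that are congruent to $a$ modulo $q$ is at least $\frac2q|U|-1$.
   Context: $U+U=\{u+u':u,u'\in U\}$. *)

(* Defs.v *)
From mathcomp Require Import all_boot all_order all_algebra.
From mathcomp Require Import finmap.
Set Implicit Arguments. Unset Strict Implicit. Unset Printing Implicit Defensive.
Import Order.TTheory GRing.Theory Num.Theory.
Local Open Scope fset_scope.

Definition sumset (U : {fset int}) : {fset int} :=
  [fset (u + v)%R | u in U, v in U].

Definition AP (k d : int) (m : nat) : {fset int} :=
  [fset (k + (i%:Z) * d)%R | i in iota 1 m].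

(* Main.v *)
Require Import Defs.
From mathcomp Require Import all_boot all_order all_algebra.
From mathcomp Require Import finmap zify ring lra.
Import Order.TTheory GRing.Theory Num.Theory.
Local Open Scope ring_scope.
Local Open Scope fset_scope.
Set Implicit Arguments. Unset Strict Implicit.
Lemma card_sep (T : choiceType) (U : {fset T}) (P : pred T) :
  #|` [fset x in U | P x]| = count P U.
Proof.
have -> : [fset x in U | P x] = [fset x in filter P U].
  by apply/fsetP => x; rewrite !inE mem_filter andbC.
by rewrite card_fseq undup_id ?size_filter // filter_uniq // fset_uniq.
Qed.

Lemma dvd_class (q r : nat) (y : int) : (r < q)%N ->
  (q%:Z %| (y - r%:Z)%R)%Z = (r == `|(y %% q%:Z)%Z|%N).
Proof.
move=> rq.
have q0 : (0 < q)%N by apply: leq_ltn_trans rq.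
rewrite -eqz_mod_dvd eq_sym (modz_small (m := r%:Z)); last first.
  by rewrite ltz_nat rq andbT.
have h : (0 <= (y %% q%:Z)%Z) by rewrite modz_ge0 // eqz_nat -lt0n.
by rewrite -{1}(gez0_abs h) eqz_nat.
Qed.

Lemma sum_classes (U : {fset int}) (q : nat) (g : int -> int) : (0 < q)%N ->
  (\sum_(r < q) #|` [fset x in U | (q%:Z %| (g x - (r : nat)%:Z)%R)%Z]|)%N = #|` U|.
Proof.
move=> q0.
under eq_bigr => r _ do rewrite card_sep -sum1_count big_mkcond /=.
rewrite exchange_big /= card_fset_sum1.

apply: eq_bigr => y _.
have yq : (`|(g y %% q%:Z)%Z|%N < q)%N.
  by rewrite -ltz_nat gez0_abs ?modz_ge0 ?ltz_pmod ?ltz_nat // eqz_nat -lt0n.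
rewrite (bigD1 (Ordinal yq)) //= dvd_class // eqxx big1 // => j /negbTE.
rewrite dvd_class //.
by case: j => j /= jq; rewrite -val_eqE /= => ->.
Qed.

Lemma seq_max (s : seq int) : s != [::] ->
  exists2 a, a \in s & forall y, y \in s -> y <= a.
Proof.
elim: s => // x [|z s] IH _.
  by exists x; rewrite ?mem_seq1 // => y; rewrite mem_seq1 => /eqP ->.
have [a ain amax] := IH isT.
exists (Num.max x a).
  by rewrite /Num.max; case: ifP => _; rewrite inE ?ain ?orbT ?eqxx.
move=> y; rewrite inE => /orP [/eqP ->|/amax ya]; first by rewrite le_max lexx.
by rewrite le_max ya orbT.
Qed.

Lemma fset_max (A : {fset int}) : A != fset0 ->
  exists2 a, a \in A & forall y, y \in A -> y <= a.
Proof.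
move=> An; apply: seq_max; apply: contraNneq An => h.
by apply/eqP/fsetP => x; rewrite in_fset0 -[x \in A]/(x \in (A : seq int)) h.
Qed.

Definition ss (A B : {fset int}) : {fset int} := [fset (u + v)%R | u in A, v in B].

Lemma ss_card n (A B : {fset int}) : #|` A| = n.+1 -> B != fset0 ->
  (#|` A| + #|` B| <= (#|` ss A B|).+1)%N.
Proof.
elim: n A => [|n IH] A cA Bn.
  have /cardfs1P [a ->] : #|` A| == 1 by rewrite cA.
  rewrite cardfs1 add1n ltnS.
  have <- : #|` [fset (a + v)%R | v in B]| = #|` B|.
    by rewrite card_imfset //=; apply: addrI.
  apply: fsubset_leq_card; apply/fsubsetP => x /imfsetP [v vB ->].
  by apply: in_imfset2; rewrite ?in_fset1.
have An : A != fset0 by rewrite -cardfs_gt0 cA.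
have [a aA amax] := fset_max An.
have [b bB bmax] := fset_max Bn.
have cA' : #|` A `\ a| = n.+1 by move: cA; rewrite (cardfsD1 a) aA => -[].
have := IH _ cA' Bn; rewrite cA cA' => h.
have sub : (a + b)%R |` ss (A `\ a) B `<=` ss A B.
  apply/fsubsetP => x; rewrite in_fset1U => /orP [/eqP ->|].
    exact: in_imfset2.
  move/imfset2P => [u]; rewrite in_fsetD1 => /andP [_ uA] [v vB ->].
  exact: in_imfset2.
have notin : (a + b)%R \notin ss (A `\ a) B.
  apply/negP => /imfset2P [u]; rewrite in_fsetD1 => /andP [ua uA] [v vB].
  move=> /eqP; apply/negP; rewrite neq_lt; apply/orP; right.
  apply: ltr_leD; last exact: bmax.
  by rewrite lt_neqAle ua amax.
have := fsubset_leq_card sub; rewrite cardfsU1 notin add1n.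
move: h; rewrite addSn ltnS => h1 h2.
by rewrite !addSn ltnS; exact: leq_ltn_trans h1 h2.
Qed.

Lemma memAP (k d : int) m x : x \in AP k d m ->
  exists2 i, (0 < i <= m)%N & x = (k + i%:Z * d)%R.
Proof.
case/imfsetP => i /=; rewrite mem_iota => /andP [i1 im] ->.
by exists i => //; rewrite i1 /=; move: im; rewrite add1n ltnS.
Qed.

Lemma classbound (k d : int) m q (V : {fset int}) : 0 < d -> (0 < m)%N -> (0 < q)%N ->
  coprimez q%:Z d -> fsubset V (AP k d m) ->
  {in V &, forall x y, (q%:Z %| (x - y)%R)%Z} -> (q * #|` V| < m + q)%N.
Proof.
move=> d0 m0 q0 cop sub cong.
pose h x := ((`|((x - k) %/ d)%Z|%N).-1 %/ q)%N.
have hE : forall i : nat, h (k + i%:Z * d)%R = (i.-1 %/ q)%N.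
  by move=> i; rewrite /h (addrC k) addrK mulzK ?gt_eqF.
have inj : {in V &, injective h}.
  move=> x y xV yV; move: (cong _ _ xV yV).
  have [i /andP [i0 im] ->] := memAP (fsubsetP sub x xV).
  have [j /andP [j0 jm] ->] := memAP (fsubsetP sub y yV).
  move=> cxy hij; move: cxy.
  have -> : ((k + i%:Z * d) - (k + j%:Z * d))%R = ((i%:Z - j%:Z) * d)%R by ring.
  rewrite Gauss_dvdzl // -eqz_mod_dvd !modz_nat eqz_nat.
  move: hij; rewrite !hE => hij /eqP mij.
  suff -> : i = j by [].
  have : i.-1 = j.-1.
    rewrite (divn_eq i.-1 q) (divn_eq j.-1 q) hij; congr (_ + _)%N.
    by apply/eqP; rewrite -(eqn_modDr 1) !addn1 !prednK // mij.
  by move=> e; rewrite -(prednK i0) -(prednK j0) e.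
have -> : #|` V| = #|` h @` V| by rewrite card_in_imfset.
have : (#|` h @` V| <= #|` [fset j | j in iota 0 ((m.-1) %/ q).+1]|)%N.
  apply: fsubset_leq_card; apply/fsubsetP => y /imfsetP [x xV ->] /=.
  have [i /andP [i0 im] ->] := memAP (fsubsetP sub x xV).
  have H : (i.-1 %/ q)%N \in iota 0 ((m.-1 %/ q).+1) by rewrite mem_iota add0n ltnS leq_div2r // -!subn1 leq_sub2r.
  by rewrite hE; apply: in_imfset.
rewrite card_fseq undup_id ?iota_uniq // size_iota => h1.
have := leq_trunc_div m.-1 q.
have : (q * #|` h @` V| <= q * ((m.-1) %/ q).+1)%N by rewrite leq_mul2l h1 orbT.
move: (#|` h @` V|) (m.-1 %/ q)%N m0 => c X m0 H1 H2.
rewrite mulnC in H2.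
lia.
Qed.

Lemma sep_sub (U : {fset int}) (P : pred int) : [fset x in U | P x] `<=` U.
Proof. by apply/fsubsetP => x; rewrite !inE => /andP []. Qed.

Close Scope fset_scope.
Unset Implicit Arguments.

Theorem mainTheorem8 (k d : int) (m : nat) (U : {fset int}) (q : nat) (a : int) :
  0 < d -> (1 <= m)%N ->
  fsubset U (AP k d m) ->
  (0 < q)%N -> coprimez q%:Z d ->
  (#|` U|%:R : rat) >= m%:R / 2 + q%:R / 2 ->
  (#|` [fset x in sumset U | (x == a %[mod q%:Z])%Z]%fset|%:R : rat)
    >= 2 / q%:R * #|` U|%:R - 1.
Proof.
move=> d0 m1 sub q0 cop hn.
set n := #|` U| in hn *.
set T := #|` _ |.
have hmq : (m + q <= 2 * n)%N.
  rewrite -(ler_nat rat) natrD natrM; lra.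
pose C (r : nat) := [fset x in U | (q%:Z %| (x - r%:Z)%R)%Z]%fset.
pose C' (r : nat) := [fset x in U | (q%:Z %| ((a - x) - r%:Z)%R)%Z]%fset.
have S1 : (\sum_(r < q) #|` C r|)%N = n := sum_classes U (fun x => x) q0.
have S2 : (\sum_(r < q) #|` C' r|)%N = n := sum_classes U (fun x => a - x) q0.
have [r hr] : exists r : 'I_q, (2 * n <= q * (#|` C r| + #|` C' r|))%N.
  apply/existsP; apply: contraT => /existsPn H.
  have : (\sum_(r < q) q * (#|` C r| + #|` C' r|) <= \sum_(r < q) (2 * n).-1)%N.
    apply: leq_sum => r _; rewrite -ltnS prednK; first by rewrite ltnNge H.
    by move: hmq q0; clear; lia.
  rewrite -big_distrr big_split /= S1 S2 sum_nat_const card_ord.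
  by move: hmq q0; clear; nia.
have bC : (q * #|` C r| < m + q)%N.
  apply: (@classbound k d m q) => //; first exact: fsubset_trans (sep_sub _ _) sub.
  move=> x y; rewrite !inE => /andP [_ hx] /andP [_ hy].
  have -> : (x - y = (x - r%:Z) - (y - r%:Z))%R by ring.
  exact: rpredB.
have bC' : (q * #|` C' r| < m + q)%N.
  apply: (@classbound k d m q) => //; first exact: fsubset_trans (sep_sub _ _) sub.
  move=> x y; rewrite !inE => /andP [_ hx] /andP [_ hy].
  have -> : (x - y = (a - y - r%:Z) - (a - x - r%:Z))%R by ring.
  exact: rpredB.
have n1 : (0 < #|` C r|)%N.
  rewrite lt0n; apply/negP => /eqP e; move: hr; rewrite e add0n.
  by move: bC' hmq; clear; lia.
have n2 : (0 < #|` C' r|)%N.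
  rewrite lt0n; apply/negP => /eqP e; move: hr; rewrite e addn0.
  by move: bC hmq; clear; lia.
have hss := ss_card (n := (#|` C r|).-1) (esym (prednK n1)) (B := C' r).
rewrite cardfs_gt0 in n2; have {}hss := hss n2.
have subT : (ss (C r) (C' r) `<=` [fset x in sumset U | (x == a %[mod q%:Z])%Z])%fset.
  apply/fsubsetP => z /imfset2P [x]; rewrite !inE => /andP [xU hx] [y].
  rewrite !inE => /andP [yU hy] ->.
  rewrite /sumset in_imfset2 //=.
  rewrite eqz_mod_dvd.
  have -> : (x + y - a = (x - r%:Z) - (a - y - r%:Z))%R by ring.
  exact: rpredB.
have hT : (2 * n <= q * T.+1)%N.
  apply: (leq_trans hr); rewrite leq_mul2l; apply/orP; right.
  apply: (leq_trans hss); rewrite ltnS; exact: fsubset_leq_card subT.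
have q0' : (0 : rat) < q%:R by rewrite ltr0n.
rewrite lerBlDr mulrAC ler_pdivrMr //.
move: hT; rewrite -(ler_nat rat) !natrM -addn1 natrD => hT.
nra.
Qed.
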